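(* Let $n\ge 2$ and consider Tower of Hanoi on three pegs with $n$ disks, starting from the initial position (all $n$ disks on Peg 1). For every intermediate position $P$ (i.e. a position in which the disks are not all on a single peg), there is a finite sequence of legal moves of even length, in which no two consecutive moves move the same disk, that transforms the initial position into $P$.
   Context: Tower of Hanoi on three pegs (labeled 1, 2, 3) with $n$ disks of pairwise distinct sizes: a position is an assignment of each disk to a peg, the disks on each peg being stacked with sizes decreasing from bottom to top. A legal move transfers the top disk of one peg to a different peg that is empty or whose top disk is larger. Here, sequences of legal moves are considered without any restriction on intermediate positions (in particular, intermediate positions may have all disks on one peg), except that no disk may be moved in two consecutive moves. *)

(* Defs.v *)
From mathcomp Require Import all_boot.
Set Implicit Arguments. Unset Strict Implicit. Unset Printing Implicit Defensive.

(* Disks are 'I_n, disk i having size i (so larger index = larger disk).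
   Pegs are 'I_3 : peg 1,2,3 of the paper are ordinals 0,1,2.
   A position assigns each disk to a peg; the stacking order on a peg is
   forced (decreasing sizes from bottom to top), so the assignment determines
   the position. *)
Definition position (n : nat) := {ffun 'I_n -> 'I_3}.

Definition initial (n : nat) : position n := [ffun => ord0].

Definition intermediate (n : nat) (P : position n) : Prop :=
  ~ (exists p : 'I_3, forall d : 'I_n, P d = p).

Definition move (n : nat) := ('I_n * 'I_3)%type.

(* The move (d,t) is legal in P: d is the top disk of its peg (no smaller disk
   on the same peg), t is a different peg, and t is empty or its top disk is
   larger than d (no smaller disk on t). *)
Definition legal_move (n : nat) (P : position n) (m : move n) : bool :=
  let: (d, t) := m in
  [&& t != P d,
      [forall e : 'I_n, (e < d) ==> (P e != P d)] &
      [forall e : 'I_n, (e < d) ==> (P e != t)]].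

Definition apply_move (n : nat) (P : position n) (m : move n) : position n :=
  [ffun e => if e == m.1 then m.2 else P e].

Fixpoint legal_seq (n : nat) (P : position n) (ms : seq (move n)) (Q : position n)
  : bool :=
  match ms with
  | [::] => P == Q
  | m :: ms' => legal_move P m && legal_seq (apply_move P m) ms' Q
  end.

Fixpoint no_repeat_disk (n : nat) (ms : seq (move n)) : bool :=
  match ms with
  | m1 :: ((m2 :: _) as ms') => (m1.1 != m2.1) && no_repeat_disk ms'
  | _ => true
  end.

(* Main.v *)
Require Import Defs.
From mathcomp Require Import all_boot zify.
Set Implicit Arguments. Unset Strict Implicit. Unset Printing Implicit Defensive.

Definition perf n (a : 'I_3) : position n := [ffun => a].
Definition ext n (Q : position n) (c : 'I_3) : position n.+1 :=
  [ffun i : 'I_n.+1 => if insub (val i) is Some j then Q j else c].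
Definition wd n (j : 'I_n) : 'I_n.+1 := widen_ord (leqnSn n) j.
Definition liftm n (m : move n) : move n.+1 := (wd m.1, m.2).

Lemma extW n (Q : position n) c j : ext Q c (wd j) = Q j.
Proof. by rewrite ffunE /= (valK j). Qed.

Lemma extM n (Q : position n) c : ext Q c ord_max = c.
Proof. by rewrite ffunE /= insubF // ltnn. Qed.

Lemma ord_cases n (i : 'I_n.+1) : i = ord_max \/ exists j : 'I_n, i = wd j.
Proof.
case: (ltnP i n) => h; first by right; exists (Ordinal h); apply: val_inj.
by left; apply: val_inj => /=; have := ltn_ord i; lia.
Qed.

Lemma wd_inj n : injective (@wd n).
Proof. by move=> x y /(congr1 val) /= /val_inj. Qed.

Lemma wd_neq n (j : 'I_n) : wd j != ord_max.
Proof. by rewrite -val_eqE /= neq_ltn ltn_ord. Qed.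

Lemma ext_inj n c : injective (fun Q : position n => ext Q c).
Proof. by move=> Q R /= h; apply/ffunP => j; rewrite -(extW Q c) h extW. Qed.

Lemma perf_ext n a : perf n.+1 a = ext (perf n a) a.
Proof.
apply/ffunP => i; case: (ord_cases i) => [->|[j ->]]; first by rewrite extM ffunE.
by rewrite extW !ffunE.
Qed.

Lemma forall_wd n (d : 'I_n) (F : 'I_n.+1 -> bool) :
  [forall e : 'I_n.+1, (e < wd d) ==> F e] = [forall e : 'I_n, (e < d) ==> F (wd e)].
Proof.
apply/forallP/forallP => h e; first exact: (h (wd e)).
case: (ord_cases e) => [->|[j ->]]; last exact: h.
by apply/implyP => /=; have := ltn_ord d; lia.
Qed.

Lemma legal_lift n (Q : position n) c m :
  legal_move (ext Q c) (liftm m) = legal_move Q m.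
Proof.
case: m => d t; rewrite /legal_move /liftm /= !forall_wd extW.
congr [&& _, _ & _]; apply: eq_forallb => e; by rewrite extW.
Qed.

Lemma apply_lift n (Q : position n) c m :
  apply_move (ext Q c) (liftm m) = ext (apply_move Q m) c.
Proof.
apply/ffunP => i; rewrite [in RHS]ffunE /= ffunE /=.
case: (ord_cases i) => [->|[j ->]].
  rewrite eq_sym (negbTE (wd_neq _)) insubF ?ltnn //.
  by rewrite extM.
by rewrite (valK j) (inj_eq (@wd_inj n)) extW !ffunE.
Qed.

Lemma legal_cons n (P Q : position n) m ms :
  legal_seq P (m :: ms) Q = legal_move P m && legal_seq (apply_move P m) ms Q.
Proof. by []. Qed.

Lemma legal_seq_lift n (Q R : position n) c ms :
  legal_seq Q ms R -> legal_seq (ext Q c) (map (@liftm n) ms) (ext R c).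
Proof.
elim: ms Q => [|m ms IH] Q; first by move/eqP=> /= ->.
by rewrite map_cons !legal_cons => /andP [h1 h2]; rewrite legal_lift h1 apply_lift IH.
Qed.

Lemma legal_seq_cat n (P Q R : position n) s1 s2 :
  legal_seq P s1 Q -> legal_seq Q s2 R -> legal_seq P (s1 ++ s2) R.
Proof.
elim: s1 P => [|m s1 IH] P /=; first by move/eqP->.
by case/andP=> h1 h2 h3; rewrite h1 (IH _ h2 h3).
Qed.

Lemma nr_lift n (ms : seq (move n)) : no_repeat_disk (map (@liftm n) ms) = no_repeat_disk ms.
Proof.
elim: ms => [|m1 ms IH] //; case: ms IH => [|m2 ms] IH //.
rewrite map_cons /=; move: IH; rewrite map_cons /= => ->.
by rewrite (inj_eq (@wd_inj n)).
Qed.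

Lemma nr_cat_mid n (s1 s2 : seq (move n)) m :
  no_repeat_disk s1 -> no_repeat_disk (m :: s2) -> (forall x, x \in s1 -> x.1 != m.1) ->
  no_repeat_disk (s1 ++ m :: s2).
Proof.
elim: s1 => [|x s1 IH] //= h1 h2 h3.
case: s1 IH h1 h3 => [|y s1] IH h1 h3 /=.
  by rewrite h2 andbT; apply: h3; rewrite inE.
case/andP: h1 => hxy h1; rewrite hxy /=.
apply: IH => // z hz; apply: h3; by rewrite inE hz orbT.
Qed.

Definition hd_ok n (s : seq (move n.+1)) :=
  if s is m :: _ then m.1 != ord_max else true.

Definition Uprop n := forall a r : 'I_3, a != r ->
  exists ms : seq (move n), [/\ odd (size ms), no_repeat_disk ms & legal_seq (perf n a) ms (perf n r)].

Lemma hop n (hU : Uprop n) (a b r c : 'I_3) (s2 : seq (move n.+1)) (Y : position n.+1) :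
  r != a -> r != b -> c != b -> c != r ->
  legal_seq (ext (perf n r) c) s2 Y -> no_repeat_disk s2 -> hd_ok s2 ->
  exists s, [/\ odd (size s) = odd (size s2), no_repeat_disk s, hd_ok s &
                legal_seq (ext (perf n a) b) s Y].
Proof.
move=> hra hrb hcb hcr hl hn hh.
have [ms1 [o1 n1 l1]] := hU a r (ltac:(by rewrite eq_sym)).
exists (map (@liftm n) ms1 ++ (ord_max, c) :: s2); split.
- by rewrite size_cat size_map /= oddD oddS o1 /= negbK.
- apply: nr_cat_mid; first by rewrite nr_lift.
    move: hn hh; case: s2 {hl} => [|y s2] //= -> h; by rewrite eq_sym h.
  by move=> x /mapP [m _ ->]; exact: wd_neq.
- by case: ms1 o1 {n1 l1} => [|m ms1] //= _; rewrite wd_neq.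
- apply: legal_seq_cat (legal_seq_lift b l1) _ => /=.
  apply/andP; split.
    rewrite /legal_move /=. rewrite extM hcb /=; apply/andP; split; apply/forallP => e;
    apply/implyP => he; case: (ord_cases e) => [ee|[j ->]].
    + by move: he; rewrite ee ltnn.
    + by rewrite extW ffunE.
    + by move: he; rewrite ee ltnn.
    + by rewrite extW ffunE eq_sym.
  suff -> : apply_move (ext (perf n r) b) (ord_max, c) = ext (perf n r) c by [].
  apply/ffunP => i; rewrite ffunE /=; case: (ord_cases i) => [->|[j ->]].
    by rewrite eqxx extM.
  by rewrite (negbTE (wd_neq _)) !extW.
Qed.

Lemma third (a b : 'I_3) : exists t : 'I_3, (t != a) && (t != b).
Proof.
have := ltn_ord a; have := ltn_ord b => hb ha.
case: (boolP (((a : nat) != 0) && ((b : nat) != 0))) => h1.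
  by exists ord0; rewrite -!val_eqE /=; move: h1; rewrite !(eq_sym 0).
case: (boolP (((a : nat) != 1) && ((b : nat) != 1))) => h2.
  by exists (Ordinal (isT : 1 < 3)); rewrite -!val_eqE /=; move: h2; rewrite !(eq_sym 1).
exists (Ordinal (isT : 2 < 3)); rewrite -!val_eqE /=.
move: h1 h2; rewrite !negb_and !negbK.
by case/orP=> /eqP e1; case/orP=> /eqP e2; lia.
Qed.

Lemma three (q c c' a : 'I_3) : q != c -> c' != q -> c' != c ->
  [\/ a = q, a = c | a = c'].
Proof.
rewrite -!val_eqE /= => /eqP h1 /eqP h2 /eqP h3.
have := ltn_ord q; have := ltn_ord c; have := ltn_ord c'; have := ltn_ord a.
move=> h4 h5 h6 h7.
have : (a : nat) = q \/ (a : nat) = c \/ (a : nat) = c' by lia.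
by case=> [/val_inj ->|[/val_inj ->|/val_inj ->]]; [apply: Or31|apply: Or32|apply: Or33].
Qed.

Lemma U_all n : Uprop n.+1.
Proof.
elim: n => [|n IH]; move=> a r har.
  exists [:: (ord0, r)]; split => //=.
  apply/andP; split.
    rewrite /legal_move ffunE eq_sym har /=.
    by apply/andP; split; apply/forallP.
  by apply/eqP/ffunP => i; rewrite !ffunE /= (ord1 i) eqxx.
have [t /andP [hta htr]] := third a r.
have [ms2 [o2 n2 l2]] := IH t r htr.
have hra : r != a by rewrite eq_sym.
have hrt : r != t by rewrite eq_sym.
have hh : hd_ok (map (@liftm n.+1) ms2) by case: ms2 {o2 n2 l2} => //= m ? ; rewrite wd_neq.
have hn : no_repeat_disk (map (@liftm n.+1) ms2) by rewrite nr_lift.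
have [s [os ns _ ls]] := hop IH hta hta hra hrt (legal_seq_lift r l2) hn hh.
exists s; split => //; first by rewrite os size_map o2.
by rewrite !(perf_ext n.+1).
Qed.

Definition Tprop n := forall a (P : position n), intermediate P ->
  exists ms : seq (move n), [/\ ~~ odd (size ms), no_repeat_disk ms & legal_seq (perf n a) ms P].

Lemma hd_ok_lift n (ms : seq (move n)) : hd_ok (map (@liftm n) ms).
Proof. by case: ms => //= m ?; rewrite wd_neq. Qed.

Lemma T_all n : Tprop n.+1.
Proof.
elim: n => [|n IH] a P hP.
  by exfalso; apply: hP; exists (P ord0); move=> d; rewrite (ord1 d).
have hU := U_all n.
pose Q : position n.+1 := [ffun j => P (wd j)].
pose c := P ord_max.
have HP : P = ext Q c.
  apply/ffunP => i; case: (ord_cases i) => [->|[j ->]]; first by rewrite extM.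
  by rewrite extW ffunE.
rewrite HP.
case: (boolP [exists q, [forall d, Q d == q]]) => hQ.
- case/existsP: hQ => q /forallP hq.
  have -> : Q = perf n.+1 q by apply/ffunP => d; rewrite [RHS]ffunE; apply/eqP; exact: hq.
  have hqc : q != c.
    apply/negP => /eqP hqc; apply: hP; exists c; move=> d.
    case: (ord_cases d) => [->|[j ->]] //.
    by rewrite -hqc; move: (hq j); rewrite ffunE => /eqP.
  have [c' /andP [hc'q hc'c]] := third q c.
  have hcq : c != q by rewrite eq_sym.
  have hcc' : c != c' by rewrite eq_sym.
  have hqc' : q != c' by rewrite eq_sym.
  have hnil : legal_seq (ext (perf n.+1 q) c) [::] (ext (perf n.+1 q) c) by rewrite /= eqxx.
  case: (three a hqc hc'q hc'c) => ->.
  +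
    have [s1 [o1 n1 h1 l1]] := hop hU hqc hqc' hcc' hcq hnil erefl erefl.
    have [s [os ns _ ls]] := hop hU hcq hcq hc'q hc'c l1 n1 h1.
    by exists s; rewrite os o1 perf_ext.
  +
    have [s1 [o1 n1 h1 l1]] := hop hU hqc hqc' hcc' hcq hnil erefl erefl.
    have [s2 [o2 n2 h2 l2]] := hop hU hcc' hcq hc'q hc'c l1 n1 h1.
    have [s [os ns _ ls]] := hop hU hc'c hc'c hqc hqc' l2 n2 h2.
    by exists s; rewrite os o2 o1 perf_ext.
  +
    have [s [os ns _ ls]] := hop hU hqc' hqc' hcc' hcq hnil erefl erefl.
    by exists s; rewrite os perf_ext.
- have hQi : intermediate Q.
    move=> [q hq]; move/negP: hQ; apply; apply/existsP; exists q.
    by apply/forallP => d; rewrite hq.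
  case: (eqVneq c a) => [<-|hca].
    have [ms [o1 n1 l1]] := IH c Q hQi.
    exists (map (@liftm n.+1) ms); rewrite size_map nr_lift perf_ext; split => //.
    exact: legal_seq_lift.
  have [r /andP [hra hrc]] := third a c.
  have [ms [o1 n1 l1]] := IH r Q hQi.
  have hcr : c != r by rewrite eq_sym.
  have [s [os ns _ ls]] := hop hU hra hra hca hcr (legal_seq_lift c l1)
     (ltac:(by rewrite nr_lift)) (hd_ok_lift ms).
  by exists s; rewrite os size_map o1 perf_ext.
Qed.

Theorem corollary1 (n : nat) (hn : 2 <= n) (P : position n) :
  intermediate P ->
  exists ms : seq (move n),
    [/\ ~~ odd (size ms), no_repeat_disk ms & legal_seq (initial n) ms P].
Proof.
case: n hn P => [|n] // _ P hP.
exact: (@T_all n ord0 P hP).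
Qed.
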